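(* Let $X$ be a finite nonempty set, $Y$ a nonempty compact metric space, and $u: X\times Y\to\mathbb{R}$ such that $y\mapsto u(x,y)$ is continuous for each $x\in X$. Then for every $\alpha>0$ there exists a bounded measurable function $\hat u: X\times Y\to\mathbb{R}$ such that the game $\hat{\mathcal{G}} = \langle X, Y, \hat u\rangle$ is essentially finite and is an $\alpha$-approximation of $\mathcal{G}=\langle X,Y,u\rangle$, i.e. $|u(x,y)-\hat u(x,y)|\le \alpha$ for all $(x,y)\in X\times Y$.
   Context: A game $\langle X, Y, v\rangle$ is essentially finite if there exist a finite game $\langle \hat X, \hat Y, w\rangle$ (with $\hat X,\hat Y$ finite sets) and measurable maps $f_1: X\to\hat X$, $f_2: Y\to\hat Y$ such that $v(x,y) = w(f_1(x), f_2(y))$ for all $(x,y)\in X\times Y$. A game $\langle X,Y,v'\rangle$ with bounded measurable utility is an $\alpha$-approximation of $\langle X,Y,v\rangle$ if $|v(x,y)-v'(x,y)|\le\alpha$ for all $(x,y)$. *)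

(* Defs.v *)
From mathcomp Require Import all_boot all_order all_algebra all_classical all_reals all_analysis.
Import Order.TTheory GRing.Theory Num.Theory numFieldNormedType.Exports.
Local Open Scope classical_set_scope.
Local Open Scope ring_scope.

Set Implicit Arguments.
Unset Strict Implicit.
Unset Printing Implicit Defensive.

Definition borel_set (Y : topologicalType) (A : set Y) : Prop := <<s open >> A.

(* Measurable sets of X * Y, X finite with the discrete sigma-algebra (all sets
   measurable) and Y with its Borel sigma-algebra: the product sigma-algebra,
   generated by the rectangles A `*` B with B Borel. *)
Definition prod_meas_set (X : finType) (Y : topologicalType) (S : set (X * Y)) : Prop :=
  <<s [set A `*` B | A in [set: set X] & B in (@borel_set Y)] >> S.

Definition borel_measurable_fin (Y : topologicalType) (Z : finType) (f : Y -> Z) : Prop :=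
  forall B : set Z, borel_set (f @^-1` B).

Definition prod_measurable_real (R : realType) (X : finType) (Y : topologicalType)
  (v : X * Y -> R) : Prop :=
  forall B : set R, borel_set B -> prod_meas_set (v @^-1` B).

Definition bounded_real_fun (R : realType) (T : Type) (v : T -> R) : Prop :=
  exists M : R, forall t, `|v t| <= M.

(* A game <X, Y, v> is essentially finite (X finite: every map out of X is measurable). *)
Definition essentially_finite (R : realType) (X : finType) (Y : topologicalType)
  (v : X * Y -> R) : Prop :=
  exists (Xh Yh : finType) (w : Xh -> Yh -> R) (f1 : X -> Xh) (f2 : Y -> Yh),
    borel_measurable_fin f2 /\ forall x y, v (x, y) = w (f1 x) (f2 y).

Definition alpha_approximation (R : realType) (T : Type) (alpha : R) (v v' : T -> R) : Prop :=
  forall p, `|v p - v' p| <= alpha.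

(* Main.v *)
Require Import Defs.
From mathcomp Require Import all_boot all_order all_algebra all_classical all_reals all_analysis.
From mathcomp Require Import zify lra.
Import Order.TTheory GRing.Theory Num.Theory numFieldNormedType.Exports.
Local Open Scope classical_set_scope.
Local Open Scope ring_scope.

Section SA.
Variables (T : Type) (G : set (set T)).

Lemma sU (A B : set T) : <<s G >> A -> <<s G >> B -> <<s G >> (A `|` B).
Proof.
move=> hA hB.
have -> : A `|` B = \bigcup_n (fun n : nat => if n == 0%N then A else if n == 1%N then B else set0) n.
  apply/seteqP; split => t.
    by case=> h; [exists 0%N | exists 1%N].
  by move=> [[|[|n]]] _ //=; [left|right].
apply: sigma_algebra_bigcup => -[|[|n]] //=; exact: sigma_algebra0.
Qed.

Lemma sC (A : set T) : <<s G >> A -> <<s G >> (~` A).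
Proof. by move=> hA; rewrite -setTD; exact: sigma_algebraCD. Qed.

Lemma sI (A B : set T) : <<s G >> A -> <<s G >> B -> <<s G >> (A `&` B).
Proof.
move=> hA hB; rewrite -[_ `&` _]setCK setCI; apply: sC; by apply: sU; apply: sC.
Qed.

Lemma sfinU (I : finType) (P : set I) (F : I -> set T) :
  (forall i, P i -> <<s G >> (F i)) -> <<s G >> (\bigcup_(i in P) F i).
Proof.
move=> hF.
suff H : forall r : seq I, <<s G >> [set t | exists i, [/\ i \in r, P i & F i t]].
  have -> : \bigcup_(i in P) F i = [set t | exists i, [/\ i \in enum I, P i & F i t]].
    apply/seteqP; split => t.
      by move=> [i Pi Fi]; exists i; rewrite mem_enum.
    by move=> [i [_ Pi Fi]]; exists i.
  exact: H.
elim=> [|i r IH].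
  have -> : [set t | exists i, [/\ i \in [::], P i & F i t]] = set0.
    by apply/seteqP; split => t // [i []].
  exact: sigma_algebra0.
case: (pselect (P i)) => Pi.
  have -> : [set t | exists j, [/\ j \in i :: r, P j & F j t]] =
    F i `|` [set t | exists j, [/\ j \in r, P j & F j t]].
    apply/seteqP; split => t.
      move=> [j [] ]; rewrite in_cons => /orP [/eqP -> _ Fi|jr Pj Fj]; first by left.
      by right; exists j.
    case=> [Fi|[j [jr Pj Fj]]]; first by exists i; rewrite mem_head.
    by exists j; rewrite in_cons jr orbT.
  by apply: sU => //; exact: hF.
have -> : [set t | exists j, [/\ j \in i :: r, P j & F j t]] =
  [set t | exists j, [/\ j \in r, P j & F j t]].
  apply/seteqP; split => t.
    move=> [j [] ]; rewrite in_cons => /orP [/eqP -> //|jr Pj Fj].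
    by exists j.
  by move=> [j [jr Pj Fj]]; exists j; rewrite in_cons jr orbT.
exact: IH.
Qed.

Lemma sfinI (I : finType) (F : I -> set T) :
  (forall i, <<s G >> (F i)) -> <<s G >> (\bigcap_(i in setT) F i).
Proof.
move=> hF; rewrite -[X in <<s G >> X]setCK setC_bigcap; apply: sC; apply: sfinU => i _.
by apply: sC; apply: hF.
Qed.
End SA.

Lemma borel_lt (R : realType) (Y : topologicalType) (h : Y -> R) (b : R) :
  continuous h -> borel_set [set y | h y < b].
Proof.
move=> hc; apply: sub_sigma_algebra.
exact: (@open_comp _ _ h [set r : R | r < b] (fun x _ => hc x) (@open_lt _ b)).
Qed.

Lemma borel_ge (R : realType) (Y : topologicalType) (h : Y -> R) (b : R) :
  continuous h -> borel_set [set y | b <= h y].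
Proof.
move=> hc; have -> : [set y | b <= h y] = ~` [set y | h y < b].
  by apply/seteqP; split => y /=; rewrite leNgt => /negP.
by apply: sC; apply: borel_lt.
Qed.

Lemma bound_cont (R : realType) (Y : pseudoMetricType R) (h : Y -> R) :
  compact [set: Y] -> continuous h -> exists M : R, 0 <= M /\ forall y, `|h y| <= M.
Proof.
move=> cY hc.
have : compact (h @` [set: Y]) by apply: continuous_compact => //; exact: continuous_subspaceT.
move=> /compact_bounded [M [Mr HM]].
exists (`|M| + 1); split; first by rewrite addr_ge0.
move=> y; apply: (HM (`|M| + 1)); last by exists y.
by rewrite (le_lt_trans (real_ler_norm Mr)) // ltrDl.
Qed.

Lemma floor_set_borel (R : realType) (Y : topologicalType) (h : Y -> R) (alpha : R) (c : int) :
  0 < alpha -> continuous h ->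
  borel_set [set y | Num.floor (h y / alpha) = c].
Proof.
move=> ha hc.
have -> : [set y | Num.floor (h y / alpha) = c] =
   [set y | c%:~R * alpha <= h y] `&` [set y | h y < (c + 1)%:~R * alpha].
  apply/seteqP; split => y /=.
    move=> /eqP; rewrite floor_eq => /andP [].
    by rewrite ler_pdivlMr // ltr_pdivrMr.
  move=> [h1 h2]; apply/eqP; rewrite floor_eq.
  by rewrite ler_pdivlMr // ltr_pdivrMr // h1 h2.
by apply: sI; [apply: borel_ge | apply: borel_lt].
Qed.

Lemma test (m : int) (k : int) : 0 <= k <= 2 * m + 1 -> (`|k|%N < (`|(2 * m + 1)%R|%N).+1)%N.
Proof. move=> /andP [h1 h2]. lia. Qed.

Theorem proposition4 (R : realType) (X : finType) (Y : pseudoMetricType R)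
  (hX : (0 < #|X|)%N) (y0 : Y) (hT2 : hausdorff_space Y) (hcpt : compact [set: Y])
  (u : X * Y -> R) (hu : forall x : X, continuous (fun y : Y => u (x, y)))
  (alpha : R) (halpha : 0 < alpha) :
  exists uh : X * Y -> R,
    prod_measurable_real uh /\ bounded_real_fun uh /\
    essentially_finite uh /\ alpha_approximation alpha u uh.
Proof.
have [Mx hMx] := boolp.choice (fun x : X => @bound_cont R Y _ hcpt (hu x)).
pose M := \sum_(x : X) Mx x.
have HM : forall x y, `|u (x, y)| <= M.
  move=> x y; apply: (le_trans (proj2 (hMx x) y)).
  rewrite /M (bigD1 x) //= lerDl; apply: sumr_ge0 => i _; exact: (proj1 (hMx i)).
have M0 : 0 <= M by apply: sumr_ge0 => i _; exact: (proj1 (hMx i)).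
pose m := Num.floor (M / alpha).
pose K := m + 1.
pose k x y := Num.floor (u (x, y) / alpha) + K.
have hk : forall x y, 0 <= k x y <= 2 * m + 1.
  move=> x y.
  have hup : Num.floor (u (x, y) / alpha) <= m.
    apply: le_floor; rewrite ler_pM2r ?invr_gt0 //.
    exact: le_trans (ler_norm _) (HM x y).
  have hlo : - (m + 1) < Num.floor (u (x, y) / alpha) + 1.
    rewrite -(ltr_int R) intrD intrN.
    have := floor_itv (M / alpha); have := floor_itv (u (x, y) / alpha).
    move=> /andP [_ h1] /andP [_ h2].
    have h3 : - (M / alpha) <= u (x, y) / alpha.
      rewrite -mulNr ler_pM2r ?invr_gt0 //.
      by rewrite lerNl; apply: le_trans (HM x y); rewrite -normrN ler_norm.
    rewrite intrD in h1; rewrite intrD in h2; lra.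
  rewrite /k /K; apply/andP; split; lia.
pose n := `|(2 * m + 1)%R|%N.
have Hn : forall x y, (`|k x y|%N < n.+1)%N by move=> x y; exact: test (hk x y).
pose f2 (y : Y) : {ffun X -> 'I_n.+1} := [ffun x => inord `|k x y|%N].
pose w (x : X) (z : {ffun X -> 'I_n.+1}) : R := alpha * ((z x : nat)%:R - K%:~R).
pose uh (p : X * Y) : R := w p.1 (f2 p.2).
have uhE : forall x y, uh (x, y) = alpha * (Num.floor (u (x, y) / alpha))%:~R.
  move=> x y; rewrite /uh /w /f2 /= ffunE inordK // natr_absz ger0_norm;
    last by case/andP: (hk x y).
  by rewrite /k intrD; congr (_ * _); lra.
have happrox : alpha_approximation alpha u uh.
  move=> [x y]; rewrite uhE.
  have := floor_itv (u (x, y) / alpha).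
  rewrite ler_pdivlMr // ltr_pdivrMr // intrD => /andP [h1 h2].
  rewrite ger0_norm; lra.
have f2m : borel_measurable_fin f2.
  move=> B.
  have -> : f2 @^-1` B = \bigcup_(z in B) \bigcap_(x in setT)
      [set y | Num.floor (u (x, y) / alpha) = (z x : nat)%:Z - K].
    apply/seteqP; split => y /=.
      move=> By; exists (f2 y) => // x _ /=.
      rewrite ffunE inordK // gez0_abs; last by case/andP: (hk x y).
      rewrite /k; lra.
    move=> [z Bz Hz]; suff -> : f2 y = z by [].
    apply/ffunP => x; rewrite ffunE.
    have -> : k x y = (z x : nat)%:Z by rewrite /k (Hz x I) /=; lra.
    by rewrite absz_nat inord_val.
  apply: sfinU => z _; apply: sfinI => x; exact: (@floor_set_borel R Y (fun y => u (x, y)) alpha ((z x : nat)%:Z - K) halpha (hu x)).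
exists uh; split; [|split; [|split]].
- move=> B _.
  have -> : uh @^-1` B = \bigcup_(x in setT)
      ([set x] `*` (f2 @^-1` [set z | B (w x z)])).
    apply/seteqP; split => -[x y] /=.
      by move=> By; exists x.
    by move=> [x' _ [/= -> h]].
  apply: sfinU => x _; apply: sub_sigma_algebra.
  by exists [set x] => //; exists (f2 @^-1` [set z | B (w x z)]) => //; exact: f2m.
- exists (M + alpha) => -[x y].
  have := happrox (x, y); have := HM x y.
  move=> h1 h2.
  have -> : uh (x, y) = u (x, y) - (u (x, y) - uh (x, y)) by rewrite opprB addrC subrK.
  by apply: (le_trans (ler_normB _ _)); apply: lerD.
- by exists X, {ffun X -> 'I_n.+1}, w, id, f2; split.
- exact: happrox.
Qed.
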